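(* Let $A\in\mathbb{C}^{n\times n}$ be Hermitian, $f(x)=\frac12\|xx^*-A\|_F^2$ with $\nabla f(x)=2(xx^*-A)x$, and $0<c_1<c_2<1/2$. Consider the Fletcher–Reeves conjugate gradient iteration: $x_0\in\mathbb{C}^{n\times p}_*$, $\eta_0=-\nabla f(x_0)$, $x_{k+1}=x_k+\alpha_k\eta_k$, $\eta_{k+1}=-\nabla f(x_{k+1})+\beta_{k+1}\eta_k$ with $\beta_{k+1}=\|\nabla f(x_{k+1})\|_F^2/\|\nabla f(x_k)\|_F^2$, where every $\alpha_k>0$ satisfies the strong Wolfe conditions $$f(x_k+\alpha_k\eta_k)\le f(x_k)+c_1\alpha_k\langle\nabla f(x_k),\eta_k\rangle,\qquad |\langle\nabla f(x_k+\alpha_k\eta_k),\eta_k\rangle|\le c_2|\langle\nabla f(x_k),\eta_k\rangle|,$$ and all iterates lie in $\mathbb{C}^{n\times p}_*$. If $\nabla f(x_k)\ne0$ for all $k$, then $$\liminf_{k\to\infty}\|\nabla f(x_k)\|_F=0.$$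
   Context: $\mathbb{C}^{n\times p}_*=\{X\in\mathbb{C}^{n\times p}:\operatorname{rank}X=p\}$; $\mathbb{C}^{n\times p}$ is a real vector space with inner product $\langle U,V\rangle=\Re\operatorname{tr}(U^*V)$ and induced norm $\|\cdot\|_F$. (The paper states this for the equivalent Riemannian Fletcher–Reeves CG on the quotient manifold $\mathbb{C}^{n\times p}_*/\mathcal O_p$ with metric $\Re\operatorname{tr}(U^*V)$, retraction $x\mapsto x+\tau\eta$, and differentiated-retraction vector transport; in horizontal-lift coordinates it is the iteration above.) *)

(* Defs.v *)
From HB Require Import structures.
From mathcomp Require Import all_boot all_order all_algebra.
From mathcomp Require Import all_classical all_reals all_analysis.
From mathcomp Require Import complex.

Set Implicit Arguments.
Unset Strict Implicit.
Unset Printing Implicit Defensive.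
Import Order.TTheory GRing.Theory Num.Theory.
Local Open Scope ring_scope.

Section CGDefs.
Variable R : realType.
Local Notation C := R[i].

Definition adj (n p : nat) (X : 'M[C]_(n, p)) : 'M[C]_(p, n) :=
  map_mx (@conjc R) X^T.

Definition ip (n p : nat) (U V : 'M[C]_(n, p)) : R :=
  complex.Re (\tr (adj U *m V)).

Definition frob (n p : nat) (U : 'M[C]_(n, p)) : R := Num.sqrt (ip U U).

Definition hermitianC (n : nat) (A : 'M[C]_n) : Prop := adj A = A.

(* full column rank: X in C^{n x p}_* *)
Definition fullrank (n p : nat) (X : 'M[C]_(n, p)) : Prop := \rank X = p.

Definition fcost (n p : nat) (A : 'M[C]_n) (X : 'M[C]_(n, p)) : R :=
  2^-1 * (frob (X *m adj X - A)) ^+ 2.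

Definition gradf (n p : nat) (A : 'M[C]_n) (X : 'M[C]_(n, p)) : 'M[C]_(n, p) :=
  2%:R *: ((X *m adj X - A) *m X).

Definition rscale (n p : nat) (r : R) (X : 'M[C]_(n, p)) : 'M[C]_(n, p) :=
  (r%:C)%C *: X.

End CGDefs.

(* Main.v *)
Require Import Defs.
From HB Require Import structures.
From mathcomp Require Import all_boot all_order all_algebra.
From mathcomp Require Import all_classical all_reals all_analysis.
From mathcomp Require Import complex.
From mathcomp Require Import ring lra.
Import Order.TTheory GRing.Theory Num.Theory.
Local Open Scope ring_scope.

Set Implicit Arguments.
Unset Strict Implicit.
Unset Printing Implicit Defensive.

Section S.
Variable R : realType.
Local Notation C := R[i].
Definition re2 (a b : C) : R := complex.Re a * complex.Re b + complex.Im a * complex.Im b.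
Lemma ReD (a b : C) : complex.Re (a + b) = complex.Re a + complex.Re b.
Proof. by case: a; case: b. Qed.
Lemma Re0 : complex.Re (0 : C) = 0. Proof. by []. Qed.
Lemma Re_conjM (a b : C) : complex.Re ((conjc a) * b) = re2 a b.
Proof. case: a => a1 a2; case: b => b1 b2; rewrite /re2 /=. ring. Qed.
Lemma re2C a b : re2 a b = re2 b a. Proof. rewrite /re2; ring. Qed.
Lemma re2Dl a b c : re2 (a + b) c = re2 a c + re2 b c.
Proof. case: a => ? ?; case: b => ? ?; case: c => ? ?; rewrite /re2 /=; ring. Qed.
Lemma re2Nl a c : re2 (- a) c = - re2 a c.
Proof. case: a => ? ?; case: c => ? ?; rewrite /re2 /=; ring. Qed.
Lemma re2Zl (r : R) a c : re2 ((r%:C)%C * a) c = r * re2 a c.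
Proof. case: a => ? ?; case: c => ? ?; rewrite /re2 /=; ring. Qed.
Lemma re2_ge0 a : 0 <= re2 a a.
Proof. rewrite /re2; nra. Qed.
Lemma re2_eq0 a : re2 a a = 0 -> a = 0.
Proof. case: a => a1 a2; rewrite /re2 /= => h.
have h1 : a1 = 0 by nra. have h2 : a2 = 0 by nra. by rewrite h1 h2. Qed.

Lemma ipE n p (U V : 'M[C]_(n, p)) : ip U V = \sum_i \sum_k re2 (U k i) (V k i).
Proof.
rewrite /ip /mxtrace (big_morph _ ReD Re0); apply: eq_bigr => i _.
rewrite mxE (big_morph _ ReD Re0); apply: eq_bigr => k _.
by rewrite !mxE Re_conjM.
Qed.

Section IP.
Variables (n p : nat).
Implicit Types U V W : 'M[C]_(n, p).

Lemma ipC U V : ip U V = ip V U.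
Proof. rewrite !ipE; apply: eq_bigr => i _; apply: eq_bigr => k _; exact: re2C. Qed.
Lemma ipDl U V W : ip (U + V) W = ip U W + ip V W.
Proof. rewrite !ipE -big_split; apply: eq_bigr => i _; rewrite -big_split.
apply: eq_bigr => k _; by rewrite mxE re2Dl. Qed.
Lemma ipNl U W : ip (- U) W = - ip U W.
Proof. rewrite !ipE -sumrN; apply: eq_bigr => i _; rewrite -sumrN.
apply: eq_bigr => k _; by rewrite mxE re2Nl. Qed.
Lemma ipZl r U W : ip (rscale r U) W = r * ip U W.
Proof. rewrite !ipE mulr_sumr; apply: eq_bigr => i _; rewrite mulr_sumr.
apply: eq_bigr => k _; by rewrite /rscale mxE re2Zl. Qed.
Lemma ipDr U V W : ip W (U + V) = ip W U + ip W V.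
Proof. by rewrite ipC ipDl !(ipC W). Qed.
Lemma ipNr U W : ip W (- U) = - ip W U.
Proof. by rewrite ipC ipNl ipC. Qed.
Lemma ipZr r U W : ip W (rscale r U) = r * ip W U.
Proof. by rewrite ipC ipZl ipC. Qed.
Lemma ipBl U V W : ip (U - V) W = ip U W - ip V W.
Proof. by rewrite ipDl ipNl. Qed.
Lemma ipBr U V W : ip W (U - V) = ip W U - ip W V.
Proof. by rewrite ipDr ipNr. Qed.
Lemma ip_ge0 U : 0 <= ip U U.
Proof. rewrite ipE; apply: sumr_ge0 => i _; apply: sumr_ge0 => k _; exact: re2_ge0. Qed.
Lemma ip_eq0 U : ip U U = 0 -> U = 0.
Proof.
rewrite ipE => h; apply/matrixP => k i; rewrite mxE.
have h1 : \sum_k re2 (U k i) (U k i) = 0.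
  move: h => /psumr_eq0P; apply => // j _; apply: sumr_ge0 => k' _; exact: re2_ge0.
apply: re2_eq0; move: h1 => /psumr_eq0P; apply => // j _; exact: re2_ge0.
Qed.

Lemma frob_ge0 U : 0 <= frob U. Proof. exact: sqrtr_ge0. Qed.
Lemma frobE U : frob U ^+ 2 = ip U U.
Proof. by rewrite /frob sqr_sqrtr // ip_ge0. Qed.
Lemma frob_gt0 U : U != 0 -> 0 < frob U.
Proof.
move=> hU; rewrite lt_neqAle frob_ge0 andbT; apply/eqP => h.
move/eqP: hU; apply; apply: ip_eq0.
by rewrite -frobE -h expr0n.
Qed.

Lemma CS2 U V : ip U V ^+ 2 <= ip U U * ip V V.
Proof.
have hq : forall t, 0 <= ip U U - 2 * t * ip U V + t ^+ 2 * ip V V.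
  move=> t; have := ip_ge0 (U - rscale t V).
  rewrite ipBl !ipBr !ipZl !ipZr (ipC V U).
  suff -> : ip U U - t * ip U V - (t * ip U V - t * (t * ip V V)) =
            ip U U - 2 * t * ip U V + t ^+ 2 * ip V V by [].
  ring.
have hU := ip_ge0 U; have hV := ip_ge0 V.
have [hV0|hVp] := eqVneq (ip V V) 0.
  rewrite hV0 mulr0.
  have h1 := hq ((ip U U + 1) / (2 * ip U V)).
  have [h0|hn] := eqVneq (ip U V) 0; first by rewrite h0 expr0n.
  move: h1; rewrite hV0 mulr0 addr0.
  have -> : 2 * ((ip U U + 1) / (2 * ip U V)) * ip U V = ip U U + 1.
    by field; rewrite hn.
  lra.
have hVp' : 0 < ip V V by rewrite lt_neqAle eq_sym hVp hV.
have := hq (ip U V / ip V V).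
set a := ip U V; set b := ip V V; set c := ip U U => h.
have e : c - 2 * (a / b) * a + (a / b) ^+ 2 * b = (c * b - a ^+ 2) / b.
  by field; rewrite hVp.
move: h; rewrite e => h; have := mulr_ge0 h (ltW hVp').
rewrite divfK ?hVp //; lra.
Qed.

Lemma CS U V : ip U V <= frob U * frob V.
Proof.
have h := CS2 U V; rewrite -!frobE -exprMn in h.
have hp : 0 <= frob U * frob V by rewrite mulr_ge0 ?frob_ge0.
nra.
Qed.
Lemma CSabs U V : `|ip U V| <= frob U * frob V.
Proof.
have [h|h] := ler0P (ip U V).
  have := CS (- U) V; rewrite ipNl.
  suff -> : frob (- U) = frob U by [].
  by rewrite /frob ipNl ipNr opprK.
exact: CS.
Qed.

Lemma frobN U : frob (- U) = frob U.
Proof. by rewrite /frob ipNl ipNr opprK. Qed.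
Lemma frobZ r U : frob (rscale r U) = `|r| * frob U.
Proof.
rewrite /frob ipZl ipZr mulrA -expr2 sqrtrM ?sqr_ge0 //.
by rewrite sqrtr_sqr.
Qed.
Lemma frobD U V : frob (U + V) <= frob U + frob V.
Proof.
have h : frob (U + V) ^+ 2 <= (frob U + frob V) ^+ 2.
  rewrite frobE ipDl !ipDr sqrrD !frobE (ipC V U).
  have := CS U V; lra.
have := frob_ge0 (U + V); have := frob_ge0 U; have := frob_ge0 V.
nra.
Qed.
Lemma frobB U V : frob (U - V) <= frob U + frob V.
Proof. by have := frobD U (- V); rewrite frobN. Qed.
End IP.
End S.


Section S2.
Variable R : realType.
Local Notation C := R[i].
Lemma sq_le (x y : R) : 0 <= x -> 0 <= y -> x ^+ 2 <= y ^+ 2 -> x <= y.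
Proof. by move=> hx hy; rewrite ler_sqr ?nnegrE. Qed.
Definition nc (z : C) := re2 z z.
Lemma ncM (a b : C) : nc (a * b) = nc a * nc b.
Proof. case: a => ? ?; case: b => ? ?; rewrite /nc /re2 /=; ring. Qed.
Lemma ncD (a b : C) : nc (a + b) = nc a + 2 * re2 a b + nc b.
Proof. case: a => ? ?; case: b => ? ?; rewrite /nc /re2 /=; ring. Qed.
Lemma re2_CS (a b : C) : re2 a b ^+ 2 <= nc a * nc b.
Proof. case: a => a1 a2; case: b => b1 b2; rewrite /nc /re2 /=.
have -> : (a1 * a1 + a2 * a2) * (b1 * b1 + b2 * b2) =
  (a1 * b1 + a2 * b2) ^+ 2 + (a1 * b2 - a2 * b1) ^+ 2 by ring.
rewrite lerDl; exact: sqr_ge0. Qed.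
Lemma nc_ge0 a : 0 <= nc a. Proof. exact: re2_ge0. Qed.

Lemma cCS m (a b : 'I_m -> C) :
  nc (\sum_k a k * b k) <= (\sum_k nc (a k)) * (\sum_k nc (b k)).
Proof.
elim: m a b => [|m IH] a b; first by rewrite !big_ord0 /nc /re2 /= mul0r; lra.
rewrite !big_ord_recr /=.
set S := \sum_(i < m) _; set A := \sum_(i < m) _; set B := \sum_(i < m) _.
set w := a ord_max * b ord_max.
have hI : nc S <= A * B by exact: IH.
have hA : 0 <= A by apply: sumr_ge0 => *; exact: nc_ge0.
have hB : 0 <= B by apply: sumr_ge0 => *; exact: nc_ge0.
have ha := nc_ge0 (a ord_max); have hb := nc_ge0 (b ord_max).
have hw : nc w = nc (a ord_max) * nc (b ord_max) by rewrite ncM.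
have hX := re2_CS S w.
have hS := nc_ge0 S.
rewrite ncD hw.
set al := nc (a ord_max) in ha hw *; set be := nc (b ord_max) in hb hw *.
set X := re2 S w in hX *.
have h1 : X ^+ 2 <= (A * B) * (al * be).
  rewrite -hw; apply: (le_trans hX); apply: ler_wpM2r; [rewrite hw; nra| done].
have h2 : 4 * (A * B) * (al * be) <= (A * be + B * al) ^+ 2.
  have := sqr_ge0 (A * be - B * al); nra.
have hY : 0 <= A * be + B * al by nra.
have h3 : 2 * X <= A * be + B * al by nra.
nra.
Qed.

Lemma frobM n m p (M : 'M[C]_(n, m)) (N : 'M[C]_(m, p)) :
  frob (M *m N) <= frob M * frob N.
Proof.
have h : frob (M *m N) ^+ 2 <= (frob M * frob N) ^+ 2.
  rewrite exprMn !frobE !ipE.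
  rewrite (exchange_big _ _ _ _ _ (fun k i => re2 (M i k) (M i k))) /=.
  rewrite mulr_suml.
  under [X in _ <= X]eq_bigr do rewrite mulr_sumr.
  rewrite [X in _ <= X](exchange_big) /=.
  apply: ler_sum => j _; apply: ler_sum => i _; rewrite mxE.
  exact: cCS.
apply: sq_le h; rewrite ?mulr_ge0 ?frob_ge0 //.
Qed.

Lemma frob_adj n p (X : 'M[C]_(n, p)) : frob (adj X) = frob X.
Proof.
rewrite /frob !ipE exchange_big /=; congr Num.sqrt.
apply: eq_bigr => i _; apply: eq_bigr => k _.
rewrite /adj !mxE; case: (X _ _) => ? ?; rewrite /re2 /=; ring.
Qed.

Lemma adj1 n : adj (1%:M : 'M[C]_n) = 1%:M.
Proof. by apply/matrixP => i j; rewrite /adj !mxE conjc_nat eq_sym. Qed.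

Lemma ip_trace n p (X : 'M[C]_(n, p)) : ip X X = ip (1%:M : 'M[C]_n) (X *m adj X).
Proof. by rewrite /ip adj1 mul1mx mxtrace_mulC. Qed.
End S2.


Section S3.
Variable R : realType.
Local Notation C := R[i].

Lemma adjB n p (X Y : 'M[C]_(n, p)) : adj (X - Y) = adj X - adj Y.
Proof. by apply/matrixP => i j; rewrite /adj !mxE rmorphB. Qed.

Lemma cubic_id n p (X Y : 'M[C]_(n, p)) :
  Y *m adj Y *m Y - X *m adj X *m X =
  (Y - X) *m (adj Y *m Y) + X *m (adj (Y - X) *m Y) + X *m (adj X *m (Y - X)).
Proof.
rewrite adjB ?mulmxBl ?mulmxBr ?mulmxBl ?mulmxA.
by rewrite !addrA subrK subrK.
Qed.

Lemma frob_scal2 n p (M : 'M[C]_(n, p)) : frob ((2%:R : C) *: M) = 2 * frob M.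
Proof.
have -> : (2%:R : C) = ((2 : R)%:C)%C by rewrite rmorph_nat.
by rewrite -/(rscale 2 M) frobZ ger0_norm.
Qed.

Lemma tail_arith (F123 F12 x1 x2 x3 x4 fD fA B : R) :
  F123 <= F12 + x3 -> F12 <= x1 + x2 -> x1 <= fD * (B * B) -> x2 <= fD * (B * B) ->
  x3 <= fD * (B * B) -> x4 <= fA * fD -> F123 + x4 <= (3 * B ^+ 2 + fA) * fD.
Proof.
move=> h1 h2 h3 h4 h5 h6.
have -> : (3 * B ^+ 2 + fA) * fD = 3 * (fD * (B * B)) + fA * fD by ring.
lra.
Qed.

Lemma grad_lip n p (A : 'M[C]_n) (X Y : 'M[C]_(n, p)) (B : R) :
  frob X <= B -> frob Y <= B ->
  frob (gradf A Y - gradf A X) <= 2 * (3 * B ^+ 2 + frob A) * frob (Y - X).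
Proof.
move=> hX hY.
rewrite /gradf -scalerBr frob_scal2 -mulrA ler_pM2l //.
have -> : (Y *m adj Y - A) *m Y - (X *m adj X - A) *m X =
   (Y *m adj Y *m Y - X *m adj X *m X) - A *m (Y - X).
  by rewrite !mulmxBl mulmxBr !opprD !opprK addrACA.
rewrite cubic_id.
set D := Y - X.
have hD := frob_ge0 D; have hX0 := frob_ge0 X; have hY0 := frob_ge0 Y.
have hA0 := frob_ge0 A.
have e1 : frob (D *m (adj Y *m Y)) <= frob D * (B * B).
  apply: (le_trans (frobM _ _)); apply: ler_wpM2l => //.
  apply: (le_trans (frobM _ _)); rewrite frob_adj; exact: ler_pM.
have e2 : frob (X *m (adj D *m Y)) <= frob D * (B * B).
  apply: (le_trans (frobM _ _)).
  have := frobM (adj D) Y; rewrite frob_adj => h.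
  have hB : 0 <= B := le_trans hX0 hX.
  apply: le_trans (ler_wpM2r (frob_ge0 _) hX) _.
  have h2 : frob (adj D *m Y) <= frob D * B := le_trans h (ler_wpM2l hD hY).
  have -> : frob D * (B * B) = B * (frob D * B) by ring.
  by apply: ler_wpM2l.
have e3 : frob (X *m (adj X *m D)) <= frob D * (B * B).
  apply: (le_trans (frobM _ _)).
  have := frobM (adj X) D; rewrite frob_adj => h.
  have hB : 0 <= B := le_trans hX0 hX.
  apply: le_trans (ler_wpM2r (frob_ge0 _) hX) _.
  have h2 : frob (adj X *m D) <= B * frob D := le_trans h (ler_wpM2r hD hX).
  have -> : frob D * (B * B) = B * (B * frob D) by ring.
  by apply: ler_wpM2l.
have e4 : frob (A *m D) <= frob A * frob D by exact: frobM.
apply: (le_trans (frobB _ _)).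
have f1 := frobD (D *m (adj Y *m Y) + X *m (adj D *m Y)) (X *m (adj X *m D)).
have f2 := frobD (D *m (adj Y *m Y)) (X *m (adj D *m Y)).
exact: (tail_arith f1 f2 e1 e2 e3 e4).
Time Qed.

Lemma level_bound n p (A : 'M[C]_n) (X : 'M[C]_(n, p)) :
  frob X ^+ 2 <= frob (1%:M : 'M[C]_n) * (frob (X *m adj X - A) + frob A).
Proof.
rewrite frobE ip_trace.
apply: (le_trans (CS _ _)); apply: ler_wpM2l; first exact: frob_ge0.
have := frobD (X *m adj X - A) A; by rewrite subrK.
Qed.
End S3.


Section S4.
Variable R : realType.
Local Open Scope classical_set_scope.

Lemma harm_unbounded (M : R) : exists K, M < \sum_(k < K) (k.+1%:R)^-1.
Proof.
apply: contrapT => hn.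
have hb : forall K, \sum_(k < K) (k.+1%:R : R)^-1 <= M.
  move=> K; rewrite leNgt; apply/negP => h; apply: hn; by exists K.
apply: (@dvg_harmonic R); apply: nondecreasing_is_cvgn.
  apply: nondecreasing_series => k _ _; exact: ltW (harmonic_gt0 k).
exists M => _ [K _ <-]; rewrite /series /= big_mkord; exact: hb.
Qed.

Lemma liminf0 (u : nat -> R) : (forall k, 0 <= u k) ->
  (forall N (g : R), 0 < g -> exists2 k, (N <= k)%N & u k < g) ->
  limn_einf (fun k => (u k)%:E) = 0%E.
Proof.
move=> h0 hs.
have e : einfs (fun k => (u k)%:E) = fun _ => 0%E.
  apply: funext => N; rewrite /einfs /=; apply: le_anti; apply/andP; split.
    apply/lee_addgt0Pr => e he; rewrite add0e.
    have [k hk hu] := hs N e he.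
    apply: (le_trans (ereal_inf_lbound _)); first by exists k.
    by rewrite lee_fin ltW.
  apply/ereal_infP => _ [k _ <-]; by rewrite lee_fin.
rewrite limn_einf_lim e; exact: lim_cst.
Qed.
End S4.


Section Arith.
Variable R : realType.

Lemma sg_facts (c : R) : 0 < c -> c < 2^-1 ->
  1 < (1 - c)^-1 /\ (1 - c)^-1 < 2 /\ (1 - c)^-1 = 1 + c * (1 - c)^-1.
Proof.
move=> h0 h1; have hp : 0 < 1 - c by lra.
have hs : (1 - c)^-1 * (1 - c) = 1 by rewrite mulVf // gt_eqF.
have hs0 : 0 < (1 - c)^-1 by rewrite invr_gt0.
set s := (1 - c)^-1 in hs hs0 *.
split; [nra | split; nra].
Qed.

Lemma fr_step (s c G G' dk e : R) : 0 < G -> 0 < G' -> 0 <= c -> s = 1 + c * s ->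
  0 < s -> - s * G <= dk -> dk <= (s - 2) * G -> `|e| <= c * `|dk| ->
  - s * G' <= - G' + (G' / G) * e /\ - G' + (G' / G) * e <= (s - 2) * G'.
Proof.
move=> hG hG' hc hs hs0 h1 h2 he.
have hd : `|dk| <= s * G by rewrite ler_norml; apply/andP; split; nra.
have he2 : `|e| <= c * (s * G) := le_trans he (ler_wpM2l hc hd).
have hb0 : 0 <= G' / G by rewrite divr_ge0 // ltW.
have hbe : `|(G' / G) * e| <= c * s * G'.
  rewrite normrM ger0_norm //.
  have -> : c * s * G' = (G' / G) * (c * (s * G)) by field; rewrite gt_eqF.
  exact: ler_wpM2l.
have hsG : s * G' = G' + c * s * G' by rewrite {1}hs; ring.
move: hbe; rewrite ler_norml => /andP[h3 h4].
split; nra.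
Qed.

Lemma H_step (s c c3 G G' H e m t : R) : 0 < G -> 0 < m -> m <= G' -> 0 <= c -> 0 <= s ->
  c3 = 1 + 2 * (c * s) -> `|e| <= c * (s * G) -> 0 <= t ->
  H <= c3 * t / m * G ^+ 2 ->
  G' - 2 * (G' / G) * e + (G' / G) * ((G' / G) * H) <= c3 * (t + 1) / m * G' ^+ 2.
Proof.
move=> hG hm hmG hc hs hc3 he ht hH.
have hG' : 0 < G' by apply: lt_le_trans hmG.
have hb0 : 0 <= G' / G by rewrite divr_ge0 // ltW.
have e1 : - (2 * (G' / G) * e) <= 2 * c * s * G'.
  have : `|(G' / G) * e| <= c * s * G'.
    rewrite normrM ger0_norm //.
    have -> : c * s * G' = (G' / G) * (c * (s * G)) by field; rewrite gt_eqF.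
    exact: ler_wpM2l.
  rewrite ler_norml => /andP[h1 h2]; nra.
have e2 : (G' / G) * ((G' / G) * H) <= c3 * t / m * G' ^+ 2.
  have -> : c3 * t / m * G' ^+ 2 = (G' / G) * ((G' / G) * (c3 * t / m * G ^+ 2)).
    by field; rewrite (gt_eqF hm) (gt_eqF hG).
  apply: ler_wpM2l => //; exact: ler_wpM2l.
have e3 : G' <= G' ^+ 2 / m.
  rewrite ler_pdivlMr // expr2; nra.
have hc30 : 1 <= c3 by rewrite hc3; have := mulr_ge0 hc hs; lra.
have e4 : c3 * G' <= c3 / m * G' ^+ 2.
  have -> : c3 / m * G' ^+ 2 = c3 * (G' ^+ 2 / m) by rewrite mulrAC mulrA.
  apply: ler_wpM2l => //; lra.
have -> : c3 * (t + 1) / m * G' ^+ 2 = c3 * t / m * G' ^+ 2 + c3 / m * G' ^+ 2.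
  by field; rewrite (gt_eqF hm).
have e5 : G' + 2 * c * s * G' = c3 * G' by rewrite hc3; ring.
lra.
Qed.
End Arith.


Section Arith2.
Variable R : realType.

Lemma zout_step (c1 c2 L a d H dl G f f' : R) :
  0 < c1 -> c2 < 1 -> 0 < L -> 0 < a -> d < 0 -> 0 < dl -> 0 <= G ->
  dl * G <= - d -> (1 - c2) * (- d) <= L * a * H -> f' <= f + c1 * a * d ->
  c1 * (1 - c2) * dl ^+ 2 * G ^+ 2 <= L * H * (f - f').
Proof.
move=> hc1 hc2 hL ha hd hdl hG h1 h2 h3.
have hH : 0 <= H.
  have : 0 < L * a * H by nra.
  rewrite pmulr_rgt0 ?mulr_gt0 //; exact: ltW.
have q1 : (1 - c2) * (d * d) <= L * H * (a * (- d)).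
  have hd' : 0 <= - d by lra.
  have := ler_wpM2r hd' h2; nra.
have q2 : c1 * (a * (- d)) <= f - f' by nra.
have q3 : dl ^+ 2 * G ^+ 2 <= d * d.
  have : 0 <= dl * G by nra.
  nra.
have q4 : c1 * (1 - c2) * (d * d) <= L * H * (f - f').
  have hLH : 0 <= L * H by nra.
  have := ler_wpM2l hLH q2; nra.
have : c1 * (1 - c2) * (dl ^+ 2 * G ^+ 2) <= c1 * (1 - c2) * (d * d).
  apply: ler_wpM2l => //; nra.
nra.
Qed.

Lemma bnd_lemma (fx F1 E fA f0 : R) : 0 <= fx -> 0 <= F1 -> 0 <= E -> 0 <= fA ->
  2^-1 * E ^+ 2 <= f0 -> fx ^+ 2 <= F1 * (E + fA) -> fx <= F1 * (2 * f0 + 1 + fA) + 1.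
Proof.
move=> h1 h2 h3 h4 h5 h6.
have hE : E <= 2 * f0 + 1 by nra.
have : F1 * (E + fA) <= F1 * (2 * f0 + 1 + fA) by apply: ler_wpM2l => //; lra.
nra.
Qed.

Lemma kappa_step (P L c3 m t H G D : R) : 0 < P -> 0 < L -> 0 < c3 -> 0 < m -> 0 < t ->
  0 < G -> 0 <= D -> P * G ^+ 2 <= L * H * D -> H <= c3 * t / m * G ^+ 2 ->
  P * m / (L * c3) * t^-1 <= D.
Proof.
move=> hP hL hc3 hm ht hG hD h1 h2.
have h3 : L * H * D <= L * (c3 * t / m * G ^+ 2) * D.
  apply: ler_wpM2r => //; apply: ler_wpM2l => //; exact: ltW.
have h4 : P * G ^+ 2 <= (L * c3 * t / m * D) * G ^+ 2.
  apply: (le_trans h1); apply: (le_trans h3); rewrite le_eqVlt; apply/orP; left.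
  apply/eqP; by field; rewrite (gt_eqF hm).
have hG2 : 0 < G ^+ 2 by rewrite exprn_gt0.
have h5 : P <= L * c3 * t / m * D by rewrite -(ler_pM2r hG2).
have -> : P * m / (L * c3) * t^-1 = P / (L * c3 * t / m).
  by field; rewrite (gt_eqF hm) (gt_eqF hL) (gt_eqF hc3) (gt_eqF ht).
rewrite ler_pdivrMr; last by rewrite !(mulr_gt0, invr_gt0).
by rewrite mulrC.
Qed.
End Arith2.


Lemma dec_arith (R : realType) (c1 a d f f' : R) : 0 < c1 -> 0 < a -> d < 0 ->
  f' <= f + c1 * a * d -> f' <= f.
Proof. move=> h1 h2 h3 h4; have : 0 < c1 * a by rewrite mulr_gt0. nra. Qed.

Lemma curv_a (R : realType) (c2 D E : R) : D < 0 -> `|E| <= c2 * `|D| -> c2 * D <= E.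
Proof. move=> hd; rewrite (ltr0_norm hd) ler_norml => /andP[h _]; lra. Qed.
Lemma curv_b (R : realType) (c2 D E Z : R) : c2 * D <= E -> E - D <= Z -> (1 - c2) * (- D) <= Z.
Proof. move=> h1 h2; lra. Qed.

Lemma absd (R : realType) (s G D : R) : 0 < G -> 0 < s -> - s * G <= D -> D <= (s - 2) * G ->
  `|D| <= s * G.
Proof. move=> h1 h2 h3 h4; rewrite ler_norml; apply/andP; split; nra. Qed.
Lemma sum_arith (R : realType) (a b f0 f1 f2 : R) : a <= f0 - f1 -> b <= f1 - f2 -> a + b <= f0 - f2.
Proof. move=> *; lra. Qed.
Lemma fin_arith (R : realType) (a f0 f1 : R) : f0 < a -> a <= f0 - f1 -> 0 <= f1 -> False.
Proof. move=> *; lra. Qed.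

Section Main.
Variables (R : realType) (n p : nat) (A : 'M[R[i]]_n)
  (c1 c2 : R) (x eta : nat -> 'M[R[i]]_(n, p)) (alpha : nat -> R).
Hypotheses (hc1 : 0 < c1) (hc12 : c1 < c2) (hc2 : c2 < 2^-1)
  (he0 : eta 0%N = - gradf A (x 0%N))
  (hx : forall k, x k.+1 = x k + rscale (alpha k) (eta k))
  (he : forall k, eta k.+1 = - gradf A (x k.+1)
       + rscale ((frob (gradf A (x k.+1))) ^+ 2 / (frob (gradf A (x k))) ^+ 2)
                (eta k))
  (ha : forall k, 0 < alpha k)
  (hW1 : forall k, fcost A (x k + rscale (alpha k) (eta k))
             <= fcost A (x k) + c1 * alpha k * ip (gradf A (x k)) (eta k))
  (hW2 : forall k, `| ip (gradf A (x k + rscale (alpha k) (eta k))) (eta k) |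
             <= c2 * `| ip (gradf A (x k)) (eta k) |)
  (hg : forall k, gradf A (x k) != 0).

Local Notation g k := (gradf A (x k)).
Local Notation G k := (frob (gradf A (x k)) ^+ 2).
Local Notation d k := (ip (gradf A (x k)) (eta k)).
Local Notation H k := (ip (eta k) (eta k)).
Local Notation sg := ((1 - c2)^-1).
Local Notation e k := (ip (gradf A (x k.+1)) (eta k)).

Lemma hG k : 0 < G k.
Proof. by rewrite exprn_gt0 // frob_gt0. Qed.
Lemma W1 k : fcost A (x k.+1) <= fcost A (x k) + c1 * alpha k * d k.
Proof. by rewrite hx. Qed.
Lemma W2 k : `| e k | <= c2 * `| d k |.
Proof. by rewrite hx. Qed.

Lemma d_next k : d k.+1 = - G k.+1 + (G k.+1 / G k) * e k.
Proof. by rewrite he ipDr ipNr ipZr -frobE. Qed.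

Lemma H_next k : H k.+1 =
  G k.+1 - 2 * (G k.+1 / G k) * e k + (G k.+1 / G k) * ((G k.+1 / G k) * H k).
Proof.
rewrite he ipDl !ipDr ipNl !ipNr ipZl !ipZr ipNl ipZl opprK -frobE (ipC (eta k)).
by rewrite mulrA; ring.
Qed.

Lemma FR k : - sg * G k <= d k <= (sg - 2) * G k.
Proof.
have [s1 [s2 s3]] := sg_facts (lt_trans hc1 hc12) hc2.
elim: k => [|k /andP[IH1 IH2]].
  rewrite he0 ipNr -frobE; apply/andP; split; nra.
have := fr_step (hG k) (hG k.+1) (ltW (lt_trans hc1 hc12)) s3 (lt_trans ltr01 s1) IH1 IH2 (W2 k).
by rewrite d_next => -[-> ->].
Qed.

Lemma d_neg k : d k < 0 /\ (2 - sg) * G k <= - d k.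
Proof.
have [s1 [s2 s3]] := sg_facts (lt_trans hc1 hc12) hc2.
have /andP[h1 h2] := FR k; have := hG k; split; nra.
Qed.

Lemma fdec k : fcost A (x k.+1) <= fcost A (x k).
Proof.
have [hd _] := d_neg k.
exact: dec_arith hc1 (ha k) hd (W1 k).
Qed.

Lemma fle k : fcost A (x k) <= fcost A (x 0).
Proof. elim: k => [//|k IH]; exact: le_trans (fdec k) IH. Qed.

Lemma fcost_ge0 (X : 'M[R[i]]_(n, p)) : 0 <= fcost A X.
Proof. rewrite /fcost mulr_ge0 // ?invr_ge0 ?ler0n //; exact: sqr_ge0. Qed.

Definition Bd := frob (1%:M : 'M[R[i]]_n) * (2 * fcost A (x 0) + 1 + frob A) + 1.

Lemma Bd_ge1 : 1 <= Bd.
Proof.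
rewrite /Bd lerDr; apply: mulr_ge0; first exact: frob_ge0.
have := fcost_ge0 (x 0); have := frob_ge0 A; lra.
Qed.

Lemma xB k : frob (x k) <= Bd.
Proof.
have lb := level_bound A (x k); have fl := fle k; rewrite /fcost in fl.
exact: bnd_lemma (frob_ge0 _) (frob_ge0 _) (frob_ge0 _) (frob_ge0 _) fl lb.
Qed.

Definition Lc := 2 * (3 * Bd ^+ 2 + frob A).

Lemma Lc_gt0 : 0 < Lc.
Proof.
rewrite /Lc; have := Bd_ge1; have := frob_ge0 A; nra.
Qed.

Lemma curv k : (1 - c2) * (- d k) <= Lc * alpha k * H k.
Proof.
have [hd _] := d_neg k.
have h1 : c2 * d k <= e k := curv_a hd (W2 k).
have h2 : e k - d k <= frob (g k.+1 - g k) * frob (eta k).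
  by rewrite -ipBl; exact: CS.
have h3 : frob (g k.+1 - g k) <= Lc * frob (x k.+1 - x k).
  exact: grad_lip (xB k) (xB k.+1).
have h4 : frob (x k.+1 - x k) = alpha k * frob (eta k).
  by rewrite hx addrAC subrr add0r frobZ ger0_norm // ltW.
rewrite h4 in h3.
have h5 : Lc * (alpha k * frob (eta k)) * frob (eta k) = Lc * alpha k * H k.
  by rewrite -frobE expr2 !mulrA.
have := ler_wpM2r (frob_ge0 (eta k)) h3; rewrite h5 => h6.
exact: curv_b h1 (le_trans h2 h6).
Qed.

Lemma zout k : c1 * (1 - c2) * (2 - sg) ^+ 2 * G k ^+ 2 <=
   Lc * H k * (fcost A (x k) - fcost A (x k.+1)).
Proof.
have [s1 [s2 s3]] := sg_facts (lt_trans hc1 hc12) hc2.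
have [hd hdl] := d_neg k.
have hc2l : c2 < 1 by apply: lt_trans hc2 _; rewrite invf_lt1 ?ltr1n ?ltr0n.
have hdl0 : 0 < 2 - sg by rewrite subr_gt0.
exact: (zout_step hc1 hc2l Lc_gt0 (ha k) hd hdl0 (ltW (hG k)) hdl (curv k) (W1 k)).
Qed.

Lemma fmin N : exists m0 : R, 0 < m0 /\ forall j, (j < N)%N -> m0 <= G j.
Proof.
elim: N => [|N [m0 [hm0 hj]]]; first by exists 1; split => // j.
exists (Num.min m0 (G N)); split; first by rewrite lt_min hm0 hG.
move=> j; rewrite ltnS leq_eqVlt => /orP[/eqP ->|hjN]; rewrite ge_min.
  by rewrite lexx orbT.
by rewrite hj.
Qed.

Lemma base_H (m c3 G0 : R) : 0 < m -> m <= G0 -> 1 <= c3 -> G0 <= c3 * 1 / m * G0 ^+ 2.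
Proof.
move=> hm hmG hc3.
have hG0 : 0 < G0 by apply: lt_le_trans hmG.
have -> : c3 * 1 / m * G0 ^+ 2 = c3 * (G0 / m) * G0 by rewrite expr2; field; rewrite gt_eqF.
have h1 : 1 <= G0 / m by rewrite ler_pdivlMr // mul1r.
have : 1 <= c3 * (G0 / m) by nra.
nra.
Qed.

Lemma Hbound (m : R) : 0 < m -> (forall j, m <= G j) ->
  forall k, H k <= (1 + 2 * (c2 * sg)) * (k.+1)%:R / m * G k ^+ 2.
Proof.
move=> hm hmG.
have [s1 [s2 s3]] := sg_facts (lt_trans hc1 hc12) hc2.
have hc2' : 0 <= c2 := ltW (lt_trans hc1 hc12).
have hs0 : 0 < sg := lt_trans ltr01 s1.
have hc3 : 1 <= 1 + 2 * (c2 * sg).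
  rewrite lerDl; apply: mulr_ge0 => //; apply: mulr_ge0 => //; exact: ltW.
elim => [|k IH].
  rewrite he0 ipNl ipNr opprK -frobE; exact: base_H.
rewrite H_next.
have -> : (k.+2)%:R = (k.+1)%:R + 1 :> R by rewrite natr1.
have /andP[h1 h2] := FR k.
have hd : `|d k| <= sg * G k := absd (hG k) hs0 h1 h2.
have hE := le_trans (W2 k) (ler_wpM2l hc2' hd).
exact: (H_step (hG k) hm (hmG k.+1) hc2' (ltW hs0) erefl hE (ler0n _ _) IH).
Qed.

Lemma main_result : limn_einf (fun k => (frob (gradf A (x k)))%:E) = 0%E.
Proof.
have [s1 [s2 s3]] := sg_facts (lt_trans hc1 hc12) hc2.
have hc2' : 0 <= c2 := ltW (lt_trans hc1 hc12).
have hs0 : 0 < sg := lt_trans ltr01 s1.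
have hc2l : c2 < 1 by apply: lt_trans hc2 _; rewrite invf_lt1 ?ltr1n ?ltr0n.
apply: liminf0 => [k|N gm hgm]; first exact: frob_ge0.
apply: contrapT => hn.
have hge : forall k, (N <= k)%N -> gm <= frob (g k).
  move=> k hk; rewrite leNgt; apply/negP => hlt; apply: hn; by exists k.
have [m0 [hm0 hm0N]] := fmin N.
pose m := Num.min m0 (gm ^+ 2).
have hm : 0 < m by rewrite lt_min hm0 exprn_gt0.
have hmG : forall j, m <= G j.
  move=> j; rewrite ge_min; case: (ltnP j N) => hj.
    by rewrite hm0N.
  apply/orP; right; apply: lerXn2r; rewrite ?nnegrE; [exact: ltW | exact: frob_ge0 | exact: hge].
pose c3 := 1 + 2 * (c2 * sg).
have hc3 : 0 < c3.
  apply: (lt_le_trans ltr01); rewrite lerDl; apply: mulr_ge0 => //.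
  apply: mulr_ge0 => //; exact: ltW.
pose P := c1 * (1 - c2) * (2 - sg) ^+ 2.
have hP : 0 < P.
  by rewrite /P !mulr_gt0 ?exprn_gt0 ?subr_gt0.
pose kap := P * m / (Lc * c3).
have hkap : 0 < kap.
  apply: mulr_gt0; first exact: mulr_gt0.
  rewrite invr_gt0; exact: mulr_gt0 Lc_gt0 hc3.
have hstep : forall k, kap * (k.+1%:R)^-1 <= fcost A (x k) - fcost A (x k.+1).
  move=> k; apply: (kappa_step hP Lc_gt0 hc3 hm (ltr0Sn _ _) (hG k)).
  - by rewrite subr_ge0 fdec.
  - exact: zout.
  - exact: Hbound.
have hsum : forall K, kap * \sum_(k < K) (k.+1%:R)^-1 <= fcost A (x 0) - fcost A (x K).
  elim => [|K IH]; first by rewrite big_ord0 mulr0 subrr.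
  rewrite big_ord_recr /= mulrDr; exact: sum_arith IH (hstep K).
have [K hK] := harm_unbounded (fcost A (x 0) / kap).
have : kap * (fcost A (x 0) / kap) < kap * \sum_(k < K) (k.+1%:R : R)^-1.
  by rewrite ltr_pM2l.
rewrite mulrC divfK ?gt_eqF // => h.
exact: fin_arith h (hsum K) (fcost_ge0 (x K)).
Qed.
End Main.


Unset Implicit Arguments.
Set Strict Implicit.

Theorem theorem4p5 (R : realType) (n p : nat) (A : 'M[R[i]]_n)
  (c1 c2 : R) (x eta : nat -> 'M[R[i]]_(n, p)) (alpha : nat -> R) :
  hermitianC A ->
  0 < c1 -> c1 < c2 -> c2 < 2^-1 ->
  eta 0%N = - gradf A (x 0%N) ->
  (forall k, x k.+1 = x k + rscale (alpha k) (eta k)) ->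
  (forall k, eta k.+1 = - gradf A (x k.+1)
       + rscale ((frob (gradf A (x k.+1))) ^+ 2 / (frob (gradf A (x k))) ^+ 2)
                (eta k)) ->
  (forall k, 0 < alpha k) ->
  (forall k, fcost A (x k + rscale (alpha k) (eta k))
             <= fcost A (x k) + c1 * alpha k * ip (gradf A (x k)) (eta k)) ->
  (forall k, `| ip (gradf A (x k + rscale (alpha k) (eta k))) (eta k) |
             <= c2 * `| ip (gradf A (x k)) (eta k) |) ->
  (forall k, fullrank (x k)) ->
  (forall k, gradf A (x k) != 0) ->
  limn_einf (fun k => (frob (gradf A (x k)))%:E) = 0%E.
Proof.
move=> _ hc1 hc12 hc2 he0 hx he ha hW1 hW2 _ hg.
exact: (main_result hc1 hc12 hc2 he0 hx he ha hW1 hW2 hg).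
Qed.
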